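(* Let $G=(V,E)$ be a finite simple undirected graph, $G_0:=G$, and let $W_1,\dots,W_r$ be distinct subsets of $V$ such that for every $t\in\{1,\dots,r\}$, $W_t$ is a clique of $G_{t-1}$ with $|W_t|\ge2$ and $G_t:=G_{t-1}\mid W_t$. Let $k>0$ and suppose that for all $t\in\{1,\dots,r\}$, $|W_t|=k$ and the subgraph of $G_{t-1}$ induced by $\bigcup_{i=1}^tW_i$ is $k$-partite with vertex classes $V_t^1,\dots,V_t^k$. Then $|W_\ell\cap V_t^i|=1$ for all $t\in\{1,\dots,r\}$, $\ell\in\{1,\dots,t\}$ and $i\in\{1,\dots,k\}$.
   Context: The clique projection of a clique $W$ ($|W|\ge2$) of a graph $H=(V,E_H)$ is $H\mid W=(V,E_H\cup\{uv\notin E_H\mid u\ne v,\ W\subseteq N_H(u)\cup N_H(v)\})$, where $N_H(u)$ is the neighborhood of $u$ in $H$. ''$k$-partite with vertex classes $V_t^1,\dots,V_t^k$'' means these sets partition the vertex set of the induced subgraph and each is a stable set in it. *)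

(* Defs.v *)
From mathcomp Require Import all_boot.
Set Implicit Arguments. Unset Strict Implicit. Unset Printing Implicit Defensive.

Section Graphs.
Variable V : finType.

Definition simple_graph (e : rel V) : Prop := irreflexive e /\ symmetric e.

Definition nbhd (e : rel V) (u : V) : {set V} := [set v | e u v].

Definition clique_proj (e : rel V) (W : {set V}) : rel V :=
  fun u v => e u v || ((u != v) && (W \subset nbhd e u :|: nbhd e v)).

Definition is_clique (e : rel V) (W : {set V}) : Prop :=
  forall x y, x \in W -> y \in W -> x != y -> e x y.

(* G_0 := G, G_t := G_{t-1} | W_t  (W indexed from 1) *)
Fixpoint Gseq (e : rel V) (W : nat -> {set V}) (t : nat) : rel V :=
  if t is t'.+1 then clique_proj (Gseq e W t') (W t) else e.

Definition kpartite_classes (e : rel V) (U : {set V}) (k : nat)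
    (C : 'I_k -> {set V}) : Prop :=
  [/\ \bigcup_(i < k) C i = U,
      forall i j : 'I_k, i != j -> [disjoint C i & C j] &
      forall i : 'I_k, forall x y, x \in C i -> y \in C i -> ~~ e x y].

End Graphs.

(* Main.v *)
Require Import Defs.
From mathcomp Require Import all_boot.

Lemma Gseq_mono (V : finType) (G : rel V) (W : nat -> {set V}) a b x y :
  a <= b -> Gseq G W a x y -> Gseq G W b x y.
Proof.
elim: b => [|b IH]; first by rewrite leqn0 => /eqP ->.
rewrite leq_eqVlt => /orP [/eqP -> //| ab] h.
by rewrite /= /clique_proj IH.
Qed.

Lemma card_bigcup_sum (V : finType) k (A : 'I_k -> {set V}) :
  #|\bigcup_(i < k) A i| <= \sum_(i < k) #|A i|.
Proof.
apply: (big_ind2 (fun (S : {set V}) n => #|S| <= n)).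
- by rewrite cards0.
- move=> S1 n1 S2 n2 h1 h2; apply: leq_trans (leq_card_setU _ _) _.
  exact: leq_add.
- by [].
Qed.

Theorem lemma8 (V : finType) (G : rel V) (r : nat) (W : nat -> {set V})
    (k : nat) (C : nat -> 'I_k -> {set V}) :
  simple_graph G ->
  (forall s t, 1 <= s <= r -> 1 <= t <= r -> W s = W t -> s = t) ->
  (forall t, 1 <= t <= r ->
     is_clique (Gseq G W t.-1) (W t) /\ 2 <= #|W t|) ->
  0 < k ->
  (forall t, 1 <= t <= r ->
     #|W t| = k /\
     kpartite_classes (Gseq G W t.-1) (\bigcup_(1 <= i < t.+1) W i) (C t)) ->
  forall t l (i : 'I_k), 1 <= t <= r -> 1 <= l <= t ->
    #|W l :&: C t i| = 1.
Proof.
move=> _ _ hcl _ hkp t l i /andP [t1 tr] /andP [l1 lt].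
have lr : 1 <= l <= r by rewrite l1 (leq_trans lt tr).
have [hWl _] := hkp l lr.
have [_ [hU _ hst]] := hkp t (introT andP (conj t1 tr)).
have [clq _] := hcl l lr.
have le1 : forall j, #|W l :&: C t j| <= 1.
  move=> j; apply/card_le1_eqP => x y /setIP [xW xC] /setIP [yW yC].
  apply/eqP; apply: contraT => nxy.
  have e : Gseq G W t.-1 x y.
    apply: (@Gseq_mono _ _ _ l.-1); first by rewrite -!subn1 leq_sub2r.
    by apply: clq xW yW _; rewrite eq_sym.
  by move: (hst j x y xC yC); rewrite e.
have sumk : k <= \sum_(j < k) #|W l :&: C t j|.
  rewrite -{1}hWl; have hb := @card_bigcup_sum _ _ (fun j => W l :&: C t j); apply: leq_trans hb; apply: subset_leq_card.
  apply/subsetP => x xW.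
  have : x \in \bigcup_(1 <= i0 < t.+1) W i0.
    rewrite (big_rem l) /=; first by rewrite inE xW.
    by rewrite mem_index_iota l1 ltnS lt.
  rewrite -hU => /bigcupP [j _ xC]; apply/bigcupP; exists j => //.
  by rewrite inE xW xC.
apply/eqP; rewrite eqn_leq le1 /= lt0n; apply/negP => /eqP h0.
move: sumk; rewrite (bigD1 i) //= h0 add0n.
have : \sum_(j < k | j != i) #|W l :&: C t j| <= \sum_(j < k | j != i) 1.
  by apply: leq_sum => j _; apply: le1.
rewrite sum1_card cardC1 card_ord => h1 h2.
have := leq_trans h2 h1; by rewrite leqNgt ltn_predL (leq_ltn_trans (leq0n _) (ltn_ord i)).
Qed.
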